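(* Let $b,h,d\ge1$ be integers, let $D'$ be a digraph and $v\in V(D')$. Suppose that (1) every vertex of $D'$ reachable from $v$ has out-degree at least $(h+1)\cdot(d(2b-2)+1)+d$, and (2) the number of vertices of $D'$ at distance at most $(h+1)(2b-1)$ from $v$ is less than $d^h$. Then $D'$ contains a type-III gadget $G$ and a directed path $P_0$ from $v$ to $p(G)$ such that $V(P_0)\cap V(G)=\{p(G)\}$, $|V(G)|\le(2h+2)(2b-1)$ and $|V(P_0)|\le h(2b-1)$.
   Context: A gadget of type III (with parameter $b$) is a digraph consisting of designated vertices $p,q$, a vertex $r$, the arc $(p,q)$, and two internally vertex-disjoint directed paths $P_1,P_2$ from $p$ and from $q$ respectively to $r$, each of length at least $2b-1$; $p(G)$ denotes its vertex $p$. Distance from $v$ to $u$ means the length of a shortest directed $v$-$u$-path. *)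

(* Defs.v *)
(* A (finite, loopless) digraph on vertex set T is an
   irreflexive relation e : rel T ; (x,y) is an arc iff e x y. *)
From mathcomp Require Import all_boot.
Set Implicit Arguments. Unset Strict Implicit. Unset Printing Implicit Defensive.

Section Digraph.
Variables (T : finType) (e : rel T).

Definition outdeg (x : T) : nat := #|[set y | e x y]|.

(* Its length (number of arcs) is size s, its
   vertex set is x :: s. *)
Definition dipath (x : T) (s : seq T) (y : T) : bool :=
  [&& path e x s, uniq (x :: s) & last x s == y].

Definition internal (x : T) (s : seq T) (z : T) : bool :=
  [&& z \in x :: s, z != x & z != last x s].

Fixpoint dist_le (n : nat) (x y : T) : bool :=
  if n is n'.+1 then (x == y) || [exists z, e x z && dist_le n' z y]
  else x == y.

(* Type-III gadget with parameter b, with designated vertices p, q, end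
   vertex r, arc (p,q), and paths P1 = p :: s1 (from p to r) and
   P2 = q :: s2 (from q to r), internally vertex-disjoint, each of length
   at least 2b-1. *)
Definition gadget3 (b : nat) (p q r : T) (s1 s2 : seq T) : Prop :=
  [/\ e p q, dipath p s1 r, dipath q s2 r,
      (2 * b - 1 <= size s1) && (2 * b - 1 <= size s2) &
      (forall z, ~~ (internal p s1 z && (z \in q :: s2)) &&
                 ~~ (internal q s2 z && (z \in p :: s1)))].

Definition gadget_verts (p q : T) (s1 s2 : seq T) : {set T} :=
  [set z | (z \in p :: s1) || (z \in q :: s2)].

End Digraph.

(* Main.v *)
Require Import Defs.
From mathcomp Require Import all_boot.
From mathcomp Require Import zify.
From Stdlib Require Import Classical.
Set Implicit Arguments. Unset Strict Implicit. Unset Printing Implicit Defensive.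

Lemma dist_path (T : finType) (e : rel T) t x n :
  path e x t -> size t <= n -> dist_le e n x (last x t).
Proof.
elim: t x n => [|y t IH] x n /=.
  by move=> _ _; case: n => [|n] /=; rewrite eqxx.
case/andP=> exy Hp; case: n => [|n] //= Hs.
apply/orP; right; apply/existsP; exists y; rewrite exy /=.
exact: IH.
Qed.

Lemma nbr_out (T : finType) (e : rel T) (w : T) (G : {set T}) :
  #|G| < outdeg e w -> exists y, e w y && (y \notin G).
Proof.
move=> H; case: (pickP [pred y | e w y && (y \notin G)]) => [y Hy|H0].
  by exists y.
have: [set y | e w y] \subset G.
  apply/subsetP => y; rewrite inE => Hy; move: (H0 y) => /=.
  by rewrite Hy /= => /negbFE.
move/subset_leq_card; rewrite /outdeg in H; move=> H1.
by move: (leq_trans H H1); rewrite ltnn.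
Qed.

Lemma seg (T : finType) (e : rel T) (v : T) (M : nat)
  (Hdeg : forall u, connect e v u -> M <= outdeg e u) :
  forall n (G : {set T}) w, connect e v w -> w \in G -> #|G| + n <= M ->
  exists t, [/\ size t = n, path e w t, uniq t & forall z, z \in t -> z \notin G].
Proof.
elim=> [|n IH] G w cw wG HG.
  by exists [::].
have [y /andP[ewy yG]] : exists y, e w y && (y \notin G).
  apply: nbr_out; apply: leq_trans (Hdeg _ cw); lia.
have cy : connect e v y by apply: connect_trans cw (connect1 ewy).
have [t [st pt ut Ht]] := IH (y |: G) y cy (setU11 _ _) (ltac:(rewrite cardsU1 yG; lia)).
exists (y :: t); split => //=.
- by rewrite st.
- by rewrite ewy.
- rewrite ut andbT; apply/negP => /Ht; by rewrite setU11.
- move=> z; rewrite inE => /orP[/eqP->//|/Ht]; by rewrite in_setU1 negb_or => /andP[].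
Qed.

Lemma segs (T : finType) (e : rel T) (v : T) (M : nat)
  (Hdeg : forall u, connect e v u -> M <= outdeg e u) (x : T) (L : nat) :
  connect e v x -> forall m (G : {set T}), x \in G -> #|G| + m * L <= M ->
  exists ss : seq (seq T), [/\ size ss = m,
    forall s, s \in ss -> [/\ size s = L, path e x s, uniq s & forall z, z \in s -> z \notin G] &
    forall i j z, i < m -> j < m -> i != j -> z \in nth [::] ss i -> z \notin nth [::] ss j].
Proof.
move=> cx; elim=> [|m IH] G xG HG.
  by exists [::]; split => // i j z.
have [s [ss_ ps us Hs]] := seg Hdeg cx xG (ltac:(rewrite mulSn in HG; lia) : #|G| + L <= M).
have HG' : #|G :|: [set z in s]| + m * L <= M.
  have := leq_card_setU G [set z in s]; case=> H1 _.
  have H2 : #|[set z in s]| <= L by rewrite cardsE -ss_ card_size.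
  rewrite mulSn in HG; lia.
have xG' : x \in G :|: [set z in s] by rewrite inE xG.
have [ss [sz Hss Hd]] := IH _ xG' HG'.
have Hs' : forall s', s' \in ss -> forall z, z \in s' -> z \notin s.
  move=> s' /Hss [_ _ _ H] z /H; by rewrite !inE negb_or => /andP[_].
exists (s :: ss); split => /=.
- by rewrite sz.
- move=> s'; rewrite inE => /orP[/eqP->//|/Hss [a1 a2 a3 a4]]; split => // z /a4.
  by rewrite inE negb_or => /andP[].
- move=> [|i] [|j] z //= Hi Hj Hij.
  + move=> zs; apply/negP => zj.
    have Hj' : j < size ss by rewrite sz.
    have := Hs' (nth [::] ss j) (mem_nth _ Hj') z zj; by rewrite zs.
  + have Hi' : i < size ss by rewrite sz.
    move=> zi; exact: (Hs' (nth [::] ss i) (mem_nth _ Hi') z zi).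
  + exact: Hd.
Qed.
Lemma last_in (T : eqType) (x : T) s : s != [::] -> last x s \in s.
Proof. by case: s => // a s _ /=; apply: mem_last. Qed.

Lemma first_common (T : eqType) (a b : seq T) : has (mem a) b ->
  exists b1 r b2, [/\ b = rcons b1 r ++ b2, r \in a & forall z, z \in b1 -> z \notin a].
Proof.
elim: b => [|c b IH] //=; case ca: (c \in a) => /=.
  by move=> _; exists [::], c, b.
move=> /IH [b1 [r [b2 [-> ra Hb]]]]; exists (c :: b1), r, b2; split => //.
move=> z; rewrite inE => /orP[/eqP->|/Hb //]; by rewrite ca.
Qed.

Lemma split_mem (T : eqType) (r : T) a : r \in a -> exists a1 a2, a = a1 ++ r :: a2.
Proof.
elim: a => [|c a IH] //; rewrite inE => /orP[/eqP->|/IH [a1 [a2 ->]]].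
  by exists [::], a.
by exists (c :: a1), a2.
Qed.

Lemma drop_last (T : eqType) (x : T) s n : size s = n.+1 -> drop n s = [:: last x s].
Proof.
case/lastP: s => [|s y] //; rewrite size_rcons => -[] <-.
by rewrite -cats1 drop_size_cat // last_cat.
Qed.

Lemma card_bigcup_le (T I : finType) (F : I -> {set T}) :
  #|\bigcup_i F i| <= \sum_i #|F i|.
Proof.
elim/big_rec2: _ => [|i A n _ H]; first by rewrite cards0.
apply: leq_trans (leq_card_setU _ _).1 _; by rewrite leq_add2l.
Qed.

Lemma gverts_card (T : finType) (p q : T) s1 s2 :
  #|gadget_verts p q s1 s2| <= size (p :: s1) + size (q :: s2).
Proof.
rewrite -size_cat; apply: leq_trans (card_size _).
by apply: subset_leq_card; apply/subsetP => z; rewrite inE mem_cat.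
Qed.

Lemma mk_gadget (T : finType) (e : rel T) (b : nat) (x r : T) a1 b1 :
  0 < b ->
  path e x (rcons a1 r) -> path e x (rcons b1 r) ->
  uniq (x :: rcons a1 r) -> uniq (x :: rcons b1 r) ->
  (forall z, z \in rcons a1 r -> z \in rcons b1 r -> z = r) ->
  2 * b - 1 <= size (rcons a1 r) -> 2 * b - 1 <= size b1 ->
  exists q s2, rcons b1 r = q :: s2 /\ gadget3 e b x q r (rcons a1 r) s2.
Proof.
move=> b0 pa pb ua ub H sa sb.
case: b1 pb ub H sb => [|q b1] pb ub H sb; first by move: sb => /=; lia.
exists q, (rcons b1 r); split => //.
move: pb ub => /= /andP[exq pb] /andP[xn ub].
split => //.
- by rewrite /dipath pa ua last_rcons eqxx.
- by apply/and3P; split => //; rewrite last_rcons.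
- by rewrite sa size_rcons.
move=> z; rewrite /internal; apply/andP; split; apply/negP.
- case/andP => /and3P[zin zx zr] zq.
  have zin' : z \in rcons a1 r by move: zin; rewrite inE (negbTE zx).
  have := H z zin' zq; move=> Ez; by rewrite last_rcons Ez eqxx in zr.
- case/andP => /and3P[zin zq zr] zx.
  move: zx; rewrite inE => /orP[/eqP Ezx|zin'].
    by move: xn; rewrite -Ezx zin.
  have := H z zin' zin; move=> Ez; by rewrite last_rcons Ez eqxx in zr.
Qed.

Lemma arith1 (s1 s2 k h L : nat) : 0 < L -> k < h -> s1 + s2 <= 2 * (k.+1 * L) ->
  s1.+1 + s2 <= (2 * h + 2) * L.
Proof. move=> L1 kh H; have : k.+1 * L <= h * L by rewrite leq_mul2r kh orbT. nia. Qed.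

Lemma arith2 (s h k L : nat) : 0 < L -> k < h -> s <= (h - k.+1) * L + 1 -> s <= h * L.
Proof.
move=> L1 kh H; have : (h - k.+1).+1 * L <= h * L by rewrite leq_mul2r; apply/orP; right; lia.
rewrite mulSn; lia.
Qed.

Definition Goal (T : finType) (e : rel T) (b h : nat) (v : T) : Prop :=
  exists (p q r : T) (s1 s2 s0 : seq T),
    [/\ gadget3 e b p q r s1 s2,
        dipath e v s0 p,
        [set z | (z \in v :: s0) && (z \in gadget_verts p q s1 s2)] = [set p],
        #|gadget_verts p q s1 s2| <= (2 * h + 2) * (2 * b - 1) &
        size (v :: s0) <= h * (2 * b - 1)].

Lemma main (T : finType) (e : rel T) (b h d : nat) (v : T) :
  0 < b ->
  (forall u, connect e v u -> h.+1 * (d * (2 * b - 2) + 1) + d <= outdeg e u) ->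
  forall k, k <= h -> forall x s0 (F : {set T}), dipath e v s0 x ->
  (forall z, z \in v :: s0 -> z \in F) ->
  #|F| <= 1 + (h - k) * (d * (2 * b - 2) + 1) ->
  size (v :: s0) <= (h - k) * (2 * b - 1) + 1 ->
  Goal e b h v \/ exists E : {set T}, d ^ k <= #|E| /\ forall u, u \in E -> exists t,
    [/\ path e x t, uniq (x :: t), last x t = u, size t <= k * (2 * b - 1) &
        forall z, z \in t -> z \notin F].
Proof.
move=> b0 Hdeg.
have [L eL] : {L | L = 2 * b - 1} by exists (2 * b - 1).
have e2 : 2 * b - 2 = L - 1 by lia.
have L1 : 0 < L by lia.
rewrite e2 in Hdeg *; rewrite -eL.
have [D eD] : {D | D = d * (L - 1) + 1} by exists (d * (L - 1) + 1).
rewrite -eD in Hdeg *.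
elim=> [|k IH] Hk x s0 F Hdp HF HFc Hs.
  right; exists [set x]; rewrite cards1 expn0; split => // u; rewrite inE => /eqP->.
  by exists [::]; split => //=; rewrite andbT.
have [pvx uvx /eqP lvx] := and3P Hdp.
have xF : x \in F by apply: HF; rewrite -lvx mem_last.
have cx : connect e v x by apply/connectP; exists s0 => //; rewrite lvx.
have HM : #|F| + d * L <= h.+1 * D + d.
  have f1 : d * L = d * (L - 1) + d by rewrite -{1}(subnK L1) mulnDr muln1.
  have f2 : (h - k.+1).+1 * D <= h.+1 * D by rewrite leq_mul2r; apply/orP; right; lia.
  have f3 := mulSn (h - k.+1) D.
  lia.
have [ss [sz Hss Hd]] := segs Hdeg cx xF HM.
pose S := fun i : 'I_d => nth [::] ss i.
have HS : forall i : 'I_d, [/\ size (S i) = L, path e x (S i), uniq (S i) &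
    forall z, z \in S i -> z \notin F].
  by move=> i; apply: Hss; apply: mem_nth; rewrite sz.
have HSd : forall (i j : 'I_d) z, i != j -> z \in S i -> z \notin S j.
  by move=> i j z Hij; apply: Hd.
clearbody S; clear Hss Hd.
pose y := fun i : 'I_d => last x (S i).
have yS : forall i, y i \in S i.
  by move=> i; apply: last_in; case: (HS i) => sS _ _ _; rewrite -size_eq0 sS -lt0n.
pose W := \bigcup_(j : 'I_d) [set z in take (L - 1) (S j)].
have HW : #|W| <= d * (L - 1).
  apply: leq_trans (card_bigcup_le _) _.
  apply: leq_trans (_ : \sum_(i < d) (L - 1) <= _); last by rewrite sum_nat_const card_ord.
  apply: leq_sum => i _; rewrite cardsE; apply: leq_trans (card_size _) _.
  by case: (HS i) => sS _ _ _; rewrite size_takel // sS leq_subr.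
have memS : forall i z, z \in S i -> z = y i \/ z \in W.
  move=> i z; case: (HS i) => sS _ _ _.
  rewrite -(cat_take_drop (L - 1) (S i)) (drop_last x (_ : size (S i) = (L - 1).+1)); last by lia.
  rewrite mem_cat inE => /orP[zt|/eqP->]; last by left.
  by right; apply/bigcupP; exists i => //; rewrite inE.
pose Fi := fun i => F :|: W :|: [set y i].
have IHi : forall i, Goal e b h v \/ exists E : {set T}, d ^ k <= #|E| /\ forall u, u \in E ->
    exists t, [/\ path e (y i) t, uniq (y i :: t), last (y i) t = u, size t <= k * L &
      forall z, z \in t -> z \notin Fi i].
  move=> i; case: (HS i) => sS pS uS FS.
  apply: (IH _ (y i) (s0 ++ S i)); first by lia.
  - apply/and3P; split.
    + by rewrite cat_path pvx lvx.
    + rewrite -cat_cons cat_uniq uvx uS andbT /=; apply/hasPn => z /FS zF.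
      by apply/negP => /HF; rewrite (negbTE zF).
    + by rewrite last_cat lvx.
  - move=> z; rewrite -cat_cons mem_cat => /orP[/HF zF|/(memS i) [->|zW]];
      rewrite /Fi !inE ?zF ?zW ?eqxx ?orbT //.
  - have c1 := (leq_card_setU (F :|: W) [set y i]).1.
    have c2 := (leq_card_setU F W).1.
    rewrite cards1 in c1.
    have f3 : h - k = (h - k.+1).+1 by lia.
    rewrite f3 mulSn /Fi; lia.
  - rewrite /= size_cat sS; move: Hs => /= Hs.
    have f3 : h - k = (h - k.+1).+1 by lia.
    rewrite f3 mulSn; lia.
case: (classic (Goal e b h v)) => [G|nG]; first by left.
have HE : forall i : 'I_d, exists E : {set T}, d ^ k <= #|E| /\ forall u, u \in E ->
    exists t, [/\ path e (y i) t, uniq (y i :: t), last (y i) t = u, size t <= k * L &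
      forall z, z \in t -> z \notin Fi i].
  by move=> i; case: (IHi i).
have [E HE'] := fin_all_exists HE.
have ext : forall i t, path e (y i) t -> uniq (y i :: t) -> (forall z, z \in t -> z \notin Fi i) ->
    [/\ path e x (S i ++ t), uniq (x :: S i ++ t), last x (S i ++ t) = last (y i) t &
      forall z, z \in S i ++ t -> z \notin F].
  move=> i t pt ut Ft; case: (HS i) => sS pS uS FS.
  have tF : forall z, z \in t -> z \notin F.
    by move=> z /Ft; rewrite /Fi !inE !negb_or => /andP[/andP[]].
  split.
  - by rewrite cat_path pS.
  - have xS : x \notin S i by apply/negP => /FS; rewrite xF.
    rewrite -cat_cons cat_uniq /= xS uS /=; apply/andP; split; last by case/andP: ut.
    apply/hasPn => z /Ft; apply: contra; rewrite inE => /orP[/eqP->|zS].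
      by rewrite /Fi !inE xF.
    by case: (memS i z zS) => [->|zW]; rewrite /Fi !inE ?zW ?eqxx ?orbT.
  - by rewrite last_cat.
  - by move=> z; rewrite mem_cat => /orP[/FS|/tF].
case: (classic (exists i j u, [/\ i != j, u \in E i & u \in E j])) => [[i [j [u [ij ui uj]]]]|nocol].
  exfalso; apply: nG; clear e2 eD HFc HM HW IHi IH HE.
  have [_ /(_ u ui) [t1 [pt1 ut1 lt1 st1 Ft1]]] := HE' i.
  have [_ /(_ u uj) [t2 [pt2 ut2 lt2 st2 Ft2]]] := HE' j.
  have [pa ua la Fa] := ext i t1 pt1 ut1 Ft1.
  have [pb ub lb Fb] := ext j t2 pt2 ut2 Ft2.
  rewrite lt1 in la; rewrite lt2 in lb.
  have nz : forall i, S i ++ [::] != [::].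
    by move=> i0; case: (HS i0) => sS _ _ _; rewrite cats0 -size_eq0 sS -lt0n.
  have ua' : u \in S i ++ t1.
    rewrite -la; apply: last_in; case: (HS i) => sS _ _ _.
    by rewrite -size_eq0 size_cat sS -lt0n addn_gt0 L1.
  have ub' : u \in S j ++ t2.
    rewrite -lb; apply: last_in; case: (HS j) => sS _ _ _.
    by rewrite -size_eq0 size_cat sS -lt0n addn_gt0 L1.
  have [b1 [r [b2 [Eb ra Hb1]]]] : exists b1 r b2, [/\ S j ++ t2 = rcons b1 r ++ b2,
      r \in S i ++ t1 & forall z, z \in b1 -> z \notin S i ++ t1].
    by apply: first_common; apply/hasP; exists u.
  have rb : r \in S j ++ t2 by rewrite Eb mem_cat mem_rcons inE eqxx.
  have [a1 [a2 Ea]] := split_mem ra.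
  have key : forall (i j : 'I_d) t1 t2 a1 a2 r, i != j ->
      (forall z, z \in t1 -> z \notin Fi i) -> (forall z, z \in t2 -> z \notin Fi j) ->
      S i ++ t1 = a1 ++ r :: a2 -> r \in S j ++ t2 ->
      L - 1 <= size a1 /\ (size a1 = L - 1 -> r = y i).
    move=> i0 j0 u1 u2 c1 c2 r0 ij0 Fu1 Fu2 Ec rin.
    have nth_r : nth x (S i0 ++ u1) (size c1) = r0 by rewrite Ec nth_cat ltnn subnn.
    case: (HS i0) => sS _ uS _.
    split.
    - rewrite leqNgt; apply/negP => lt.
      have rt : nth x (take (L - 1) (S i0)) (size c1) = r0.
        by rewrite nth_take // -nth_r nth_cat sS (leq_trans lt (leq_subr 1 L)).
      have rT : r0 \in take (L - 1) (S i0).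
        by rewrite -rt; apply: mem_nth; rewrite size_takel // sS leq_subr.
      have rW : r0 \in W by apply/bigcupP; exists i0 => //; rewrite inE.
      move: rin; rewrite mem_cat => /orP[rS|/Fu2].
        by move: (HSd _ _ _ ij0 (mem_take rT)); rewrite rS.
      by rewrite /Fi !inE rW orbT.
    - move=> Ha; rewrite -nth_r nth_cat sS Ha ltn_subrL L1 /=.
      by rewrite /y -nth_last sS subn1.
  have [Sa Sa'] := key i j t1 t2 a1 a2 r ij Ft1 Ft2 Ea rb.
  have [Sb Sb'] := key j i t2 t1 b1 b2 r (ltac:(by rewrite eq_sym)) Ft2 Ft1 (ltac:(by rewrite Eb cat_rcons)) ra.
  have notboth : L <= size a1 \/ L <= size b1.
    case: (ltngtP (size a1) (L - 1)) => [lt|Ha|Ha]; first by rewrite ltnNge Sa in lt.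
      by left; rewrite -(prednK L1) -subn1.
    case: (ltngtP (size b1) (L - 1)) => [lt|Hb|Hb]; first by rewrite ltnNge Sb in lt.
      by right; rewrite -(prednK L1) -subn1.
    have ryi := Sa' Ha; have ryj := Sb' Hb.
    have := HSd _ _ _ ij (yS i); by rewrite -ryi ryj yS.
  have Ea' : S i ++ t1 = rcons a1 r ++ a2 by rewrite cat_rcons.
  have ina : forall z, z \in rcons a1 r -> z \in S i ++ t1.
    by move=> z zin; rewrite Ea' mem_cat zin.
  have inb : forall z, z \in rcons b1 r -> z \in S j ++ t2.
    by move=> z zin; rewrite Eb mem_cat zin.
  have H : forall z, z \in rcons a1 r -> z \in rcons b1 r -> z = r.
    move=> z za; rewrite mem_rcons inE => /orP[/eqP //|zb].
    by move: (Hb1 z zb); rewrite ina.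
  have pa1 : path e x (rcons a1 r) by move: pa; rewrite Ea' cat_path => /andP[].
  have pb1 : path e x (rcons b1 r) by move: pb; rewrite Eb cat_path => /andP[].
  have ua1 : uniq (x :: rcons a1 r) by move: ua; rewrite Ea' -cat_cons cat_uniq => /andP[].
  have ub1 : uniq (x :: rcons b1 r) by move: ub; rewrite Eb -cat_cons cat_uniq => /andP[].
  have sza : size (rcons a1 r) <= k.+1 * L.
    have : size (S i ++ t1) <= k.+1 * L by rewrite size_cat mulSn; case: (HS i) => -> _ _ _; rewrite leq_add2l.
    by rewrite Ea' size_cat => H0; apply: leq_trans (leq_addr _ _) H0.
  have szb : size (rcons b1 r) <= k.+1 * L.
    have : size (S j ++ t2) <= k.+1 * L by rewrite size_cat mulSn; case: (HS j) => -> _ _ _; rewrite leq_add2l.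
    by rewrite Eb size_cat => H0; apply: leq_trans (leq_addr _ _) H0.
  have fin : forall s1 q s2, gadget3 e b x q r s1 s2 -> (forall z, z \in s1 -> z \notin F) ->
      (forall z, z \in q :: s2 -> z \notin F) -> size s1 + size (q :: s2) <= 2 * (k.+1 * L) ->
      Goal e b h v.
    move=> s1 q s2 G F1 F2 Sz; exists x, q, r, s1, s2, s0; split => //.
    - apply/setP => z; rewrite in_set1 in_set /gadget_verts in_set.
      case: (z =P x) => [->|nzx].
        by rewrite -{1}lvx mem_last /= inE eqxx.
      apply/negP => /andP[/HF zF]; rewrite inE (negbTE (introN eqP nzx)) /=.
      by case/orP => [/F1|/F2]; rewrite zF.
    - apply: leq_trans (gverts_card _ _ _ _) _.
      by rewrite -eL; apply: arith1 Sz.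
    - by rewrite -eL; apply: arith2 Hs.
  have rA : 2 * b - 1 <= size (rcons a1 r) by rewrite size_rcons -eL -(prednK L1) -subn1.
  have rB : 2 * b - 1 <= size (rcons b1 r) by rewrite size_rcons -eL -(prednK L1) -subn1.
  case: notboth => [Ha|Hb].
  - have Ha' : 2 * b - 1 <= size a1 by rewrite -eL.
    have [q [s2 [Eq G]]] := mk_gadget b0 pb1 pa1 ub1 ua1 (fun z zb za => H z za zb) rB Ha'.
    apply: (fin _ _ _ G).
    + by move=> z /inb; apply: Fb.
    + by rewrite -Eq => z /ina; apply: Fa.
    + by rewrite -Eq mul2n -addnn; exact: leq_add szb sza.
  - have Hb' : 2 * b - 1 <= size b1 by rewrite -eL.
    have [q [s2 [Eq G]]] := mk_gadget b0 pa1 pb1 ua1 ub1 H rA Hb'.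
    apply: (fin _ _ _ G).
    + by move=> z /ina; apply: Fa.
    + by rewrite -Eq => z /inb; apply: Fb.
    + by rewrite -Eq mul2n -addnn; exact: leq_add sza szb.
right; exists (\bigcup_(i : 'I_d) E i); split.
  rewrite -sum1_card partition_disjoint_bigcup; last first.
    move=> i j ij; rewrite disjoint_subset; apply/subsetP => u ui; rewrite !inE.
    by apply/negP => uj; apply: nocol; exists i, j, u.
  rewrite expnS -[X in X * _](card_ord d) -sum_nat_const.
  apply: leq_sum => i _; rewrite sum1_card; by case: (HE' i).
move=> u /bigcupP [i _ ui].
have [_ /(_ u ui) [t [pt ut lt st Ft]]] := HE' i.
have [pa ua la Fa] := ext i t pt ut Ft.
exists (S i ++ t); split => //.
- by rewrite la.
- by rewrite size_cat mulSn; case: (HS i) => -> _ _ _; rewrite leq_add2l.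
Qed.

Theorem lemma2p11 (T : finType) (e : rel T) (b h d : nat) (v : T) :
  irreflexive e ->
  0 < b -> 0 < h -> 0 < d ->
  (forall u, connect e v u ->
     h.+1 * (d * (2 * b - 2) + 1) + d <= outdeg e u) ->
  #|[set u | dist_le e (h.+1 * (2 * b - 1)) v u]| < d ^ h ->
  exists (p q r : T) (s1 s2 s0 : seq T),
    [/\ gadget3 e b p q r s1 s2,
        dipath e v s0 p,
        [set z | (z \in v :: s0) && (z \in gadget_verts p q s1 s2)] = [set p],
        #|gadget_verts p q s1 s2| <= (2 * h + 2) * (2 * b - 1) &
        size (v :: s0) <= h * (2 * b - 1)].
Proof.
move=> _ b0 h0 d0 Hdeg Hball.
have Hdp : dipath e v [::] v by rewrite /dipath /= eqxx.
have HF : forall z, z \in [:: v] -> z \in [set v] by move=> z; rewrite !inE.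
have HFc : #|[set v]| <= 1 + (h - h) * (d * (2 * b - 2) + 1) by rewrite cards1.
have Hs : size [:: v] <= (h - h) * (2 * b - 1) + 1 by rewrite subnn.
case: (main b0 Hdeg (leqnn h) Hdp HF HFc Hs) => [G|[E [HE HE']]]; first exact: G.
exfalso.
have : #|E| <= #|[set u | dist_le e (h.+1 * (2 * b - 1)) v u]|.
  apply: subset_leq_card; apply/subsetP => u /HE' [t [pt _ lt st _]].
  rewrite inE -lt; apply: dist_path => //.
  apply: leq_trans st _; exact: leq_mul (leqnSn h) (leqnn _).
move=> H; have := leq_ltn_trans H Hball; by rewrite ltnNge HE.
Qed.
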